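(* Let $\mathcal{G}$ be a $p$-periodic graph on $V$ with arena $\mathcal{D}$, and suppose $\mathcal{G}$ is reflexive and temporally connected. If some augmented arena $\mathcal{A}$ of $\mathcal{D}$ contains a star, then every temporal node of $\mathcal{A}^*$ is an anchored star in $\mathcal{A}^*$, i.e., $\Gamma_t(u,\mathcal{A}^* )=V$ and $(t,u)$ is anchored for all $t\in\mathbb{Z}_p$, $u\in V$.
   Context: Let $V$ be a finite set and $p\ge 1$ an integer; $[t]_p$ denotes $t \bmod p$. A $p$-periodic graph $\mathcal{G}=(G_0,\dots,G_{p-1})^*$ is the infinite sequence of directed graphs $G_t=(V,E_{[t]_p})$, $t=0,1,\dots$, where $E_0,\dots,E_{p-1}\subseteq V\times V$ (self-loops allowed), each $G_i$ sinkless. $\mathcal{G}$ is reflexive if $(u,u)\in E_i$ for all $u\in V$, $i\in\mathbb{Z}_p$. $\mathcal{G}$ is temporally connected if for all $u,v\in V$ and every time $t\ge 0$ there is a journey from $u$ to $v$ starting at time $t$: a sequence $z_0=u,z_1,\dots,z_k=v$ with $(z_j,z_{j+1})\in E_{[t+j]_p}$ for $0\le j<k$. An arena on $V$ of length $p$ is a directed graph with vertex set $\mathbb{Z}_p\times V$ (temporal nodes) all of whose edges have the form $((i,w),([i+1]_p,w'))$. The arena of $\mathcal{G}$ is the arena $\mathcal{D}$ with $((i,u),([i+1]_p,v))\in E(\mathcal{D})$ iff $(u,v)\in E_i$. Write $\Gamma_t(u,\mathcal{M})=\{v : ((t,u),([t+1]_p,v))\in E(\mathcal{M})\}$. Game: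 first the cop, then the robber choose vertices. In each round $t$, with cop at $c$ and robber at $r$, the cop must move to some $c'\in\Gamma_{[t]_p}(c,\mathcal{D})$; if $c'=r$ the cop wins; otherwise the robber must move to some $r'\in\Gamma_{[t]_p}(r,\mathcal{D})$ and the next round starts. A configuration $(t,c,r)$ ($t\in\mathbb{Z}_p$) is the state at the start of a round with index $\equiv t\pmod p$, cop at $c$, robber at $r$, cop to move; it is copwin if from it the cop can force capture in finitely many rounds against every robber strategy. An augmented arena of $\mathcal{D}$ is an arena $\mathcal{A}$ with $E(\mathcal{D})\subseteq E(\mathcal{A})$ such that for every edge $((t,x),([t+1]_p,y))\in E(\mathcal{A})$ the configuration $(t,x,y)$ is copwin. $\mathcal{A}^*$ is the maximum augmented arena (edge set = union of edge sets of all augmented arenas). A temporal node $(t,u)$ is a star in an arena $\mathcal{A}$ if $\Gamma_t(u,\mathcal{A})=V$; it is anchored if there is a directed walk (possibly of length $0$) in $\mathcal{D}$ from some $(0,v)$ to $(t,u)$. *)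

(* Defs.v *)
From mathcomp Require Import all_boot.
Set Implicit Arguments. Unset Strict Implicit. Unset Printing Implicit Defensive.

(* A p-periodic graph on V is given by E : nat -> rel V, where only E 0..E (p-1)
   matter; the graph at time t is E (t %% p).  Time indices of temporal nodes /
   configurations are naturals t < p (representing Z_p). *)

Section Cops.
Variables (V : finType) (p : nat) (E : nat -> rel V).

Definition reflexive_pg : Prop := forall i u, i < p -> E i u u.
Definition sinkless_pg : Prop := forall i u, i < p -> exists v, E i u v.

Fixpoint journey (t k : nat) (u v : V) : Prop :=
  match k with
  | 0 => u = v
  | k'.+1 => exists w, E (t %% p) u w /\ journey t.+1 k' w v
  end.

Definition temporally_connected : Prop :=
  forall u v t, exists k, journey t k u v.

(* an arena on V of length p: A i x y means ((i,x),([i+1]_p,y)) is an edge,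
   for i < p (values at i >= p are irrelevant) *)
Definition arena := nat -> V -> V -> Prop.

Definition arenaD : arena := fun i x y => E (i %% p) x y.

Definition Gamma (A : arena) (t : nat) (u : V) : V -> Prop := A (t %% p) u.

(* copwin configurations: least fixed point (cop captures in finitely many rounds
   against every robber strategy) *)
Inductive copwin : nat -> V -> V -> Prop :=
  | cw_capture t c r : Gamma arenaD t c r -> copwin t c r
  | cw_step t c r c' : Gamma arenaD t c c' -> c' <> r ->
      (forall r', Gamma arenaD t r r' -> copwin (t.+1 %% p) c' r') ->
      copwin t c r.

Definition augmented (A : arena) : Prop :=
  (forall t x y, t < p -> arenaD t x y -> A t x y) /\
  (forall t x y, t < p -> A t x y -> copwin t x y).

Definition arenaStar : arena := fun t x y => exists A, augmented A /\ A t x y.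

Definition is_star (A : arena) (t : nat) (u : V) : Prop :=
  forall v, Gamma A t u v.

Definition anchored (t : nat) (u : V) : Prop :=
  exists v k, k %% p = t /\ journey 0 k v u.

End Cops.

(* Main.v *)
Require Import Defs.
From mathcomp Require Import all_boot.
From mathcomp Require Import zify.

Section S.
Variables (V : finType) (p : nat) (E : nat -> rel V).
Hypothesis p0 : 0 < p.
Hypothesis refl : reflexive_pg p E.

Lemma stay (u : V) m : forall t, journey p E t m u u.
Proof.
elim: m => [|m IH] t /=; first by [].
exists u; split; last exact: IH.
by apply: refl; rewrite ltn_pmod.
Qed.

Lemma wait (u : V) m k : forall t c, journey p E t k c u -> journey p E t (k + m) c u.
Proof.
elim: k => [|k IH] t c /=.
  by move=> ->; rewrite add0n; apply: stay.
by move=> [w [H1 H2]]; exists w; split => //; apply: IH.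
Qed.

Lemma win (t0 : nat) (u0 : V) (Hs : forall r, copwin p E t0 u0 r) k :
  forall t c, journey p E t k c u0 -> (t + k) %% p = t0 ->
  forall r, copwin p E (t %% p) c r.
Proof.
elim: k => [|k IH] t c /=.
  by move=> -> ; rewrite addn0 => ->.
move=> [w [H1 H2]] Ht r.
case: (eqVneq w r) => [<-|Hne].
  apply: cw_capture; rewrite /Gamma /arenaD !modn_mod. exact: H1.
apply: (cw_step (c' := w)).
- by rewrite /Gamma /arenaD !modn_mod.
- by apply/eqP.
move=> r' _.
have -> : (t %% p).+1 %% p = t.+1 %% p by rewrite -addn1 modnDml addn1.
by apply: IH => //; rewrite addSnnS.
Qed.
End S.

Theorem mainTheorem8 (V : finType) (p : nat) (E : nat -> rel V) :
  0 < p ->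
  sinkless_pg p E ->
  reflexive_pg p E ->
  temporally_connected p E ->
  (exists A : arena V, augmented p E A /\
     exists t u, t < p /\ is_star p A t u) ->
  forall t u, t < p ->
    is_star p (arenaStar p E) t u /\ anchored p E t u.
Proof.
move=> p0 _ refl tc [A [[_ HA] [t0 [u0 [Ht0 Hst]]]]] t u Ht.
have Hs : forall r, copwin p E t0 u0 r.
  move=> r; apply: HA => //; have := Hst r; by rewrite /Gamma modn_small.
have all : forall t c r, t < p -> copwin p E t c r.
  move=> t1 c r Ht1.
  have [k Hk] := tc c u0 t1.
  have Hj := @wait V p E p0 refl u0 (p - (t1 + k) %% p + t0) k t1 c Hk.
  rewrite -(modn_small Ht1).
  apply: (@win V p E t0 u0 Hs _ _ _ Hj).
  have Hm : (t1 + k) %% p < p by rewrite ltn_pmod.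
  rewrite addnA.
  have -> : t1 + k + (p - (t1 + k) %% p + t0) = ((t1 + k) %/ p).+1 * p + t0.
    have := divn_eq (t1 + k) p; lia.
  by rewrite modnMDl modn_small.
split.
  move=> v; rewrite /Gamma /arenaStar.
  exists (fun t x y => copwin p E t x y); split; last by apply: all; rewrite ltn_pmod.
  split => // t1 x y _ H; apply: cw_capture; by rewrite /Gamma /arenaD !modn_mod.
exists u, t; split; first exact: modn_small.
exact: (@stay V p E p0 refl u t 0).
Qed.
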